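(* Let $\{x^k\}_{k\in\mathbb N}$ and $\{d^k\}_{k\in\mathbb N}$ be sequences in $\mathbb R^n$ such that $$\sum_{k=1}^\infty \|x^{k+1}-x^k\|\cdot\|d^k\|<\infty.$$ If $\bar x$ is an accumulation point of $\{x^k\}$ and $0$ is an accumulation point of $\{d^k\}$, then there exists an infinite set $J\subset\mathbb N$ such that $x^k\to\bar x$ and $d^k\to 0$ as $k\to\infty$, $k\in J$.
   Context: $\|\cdot\|$ is the Euclidean norm on $\mathbb R^n$ and $\mathbb N=\{1,2,\dots\}$. *)

(* Defs.v *)
From Stdlib Require Import Reals.
From Coquelicot Require Import Coquelicot.
Open Scope R_scope.

(* Vectors of R^n are represented as functions nat -> R; only the
   coordinates 0..n-1 matter. *)
Definition vec := nat -> R.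

Fixpoint sumsq (n : nat) (v : vec) : R :=
  match n with O => 0 | S m => sumsq m v + (v m) ^ 2 end.
Definition enorm (n : nat) (v : vec) : R := sqrt (sumsq n v).

Definition vsub (u v : vec) : vec := fun i => u i - v i.

Definition accumulation_point (n : nat) (x : nat -> vec) (a : vec) : Prop :=
  forall eps : R, 0 < eps -> forall N : nat,
    exists k : nat, (N <= k)%nat /\ (1 <= k)%nat /\ enorm n (vsub (x k) a) < eps.

Definition converges_along (n : nat) (J : nat -> Prop) (x : nat -> vec) (a : vec) : Prop :=
  forall eps : R, 0 < eps -> exists N : nat,
    forall k : nat, J k -> (N <= k)%nat -> enorm n (vsub (x k) a) < eps.

Definition infinite_set (J : nat -> Prop) : Prop :=
  forall N : nat, exists k : nat, (N <= k)%nat /\ J k.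

(* Main.v *)
Require Import Defs.
From Stdlib Require Import Reals.
From Coquelicot Require Import Coquelicot.
From Stdlib Require Import Lra Lia Psatz Classical ClassicalEpsilon.
Open Scope R_scope.

Lemma sumsq_ext2 n f g : (forall i, f i ^ 2 = g i ^ 2) -> sumsq n f = sumsq n g.
Proof. intros H; induction n; simpl; [reflexivity| rewrite IHn; f_equal; apply H]. Qed.

Lemma sumsq0 n : sumsq n (fun _ => 0) = 0.
Proof. induction n; simpl; [auto| rewrite IHn; ring]. Qed.

Lemma sumsq_nonneg n f : 0 <= sumsq n f.
Proof. induction n; simpl; nra. Qed.

Fixpoint dot (n : nat) (u v : vec) : R :=
  match n with O => 0 | S m => dot m u v + u m * v m end.

Lemma cs n u v : (dot n u v) ^ 2 <= sumsq n u * sumsq n v.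
Proof.
  induction n; simpl. lra.
  pose proof (sumsq_nonneg n u) as HA. pose proof (sumsq_nonneg n v) as HB.
  set (A := sumsq n u) in *. set (B := sumsq n v) in *. set (P := dot n u v) in *.
  set (a := u n). set (b := v n). clearbody A B P a b.
  assert (K: 0 <= A * b^2 + B * a^2 - 2 * P * a * b + (A * B - P^2)).
  { destruct (Req_dec A 0) as [E|E].
    - rewrite E in *. assert (HP: P = 0) by nra. rewrite HP. nra.
    - assert (0 < A) by lra.
      assert (0 <= A * (A * b^2 + B * a^2 - 2 * P * a * b)).
      { assert (A * (A * b^2 + B * a^2 - 2 * P * a * b) = (A*b - P*a)^2 + (A*B - P^2)*a^2) as ->
          by ring. assert (0 <= A*B - P^2) by lra. pose proof (pow2_ge_0 (A*b - P*a)). pose proof (pow2_ge_0 a). assert (0 <= (A*B-P^2)*a^2) by (apply Rmult_le_pos; lra). lra. }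
      assert (0 <= A * b^2 + B * a^2 - 2 * P * a * b).
      { destruct (Rle_lt_dec 0 (A * b^2 + B * a^2 - 2 * P * a * b)); auto. nra. }
      lra. }
  nra.
Qed.

Lemma sumsq_add n u v :
  sumsq n (fun i => u i + v i) = sumsq n u + sumsq n v + 2 * dot n u v.
Proof. induction n; simpl. ring. rewrite IHn. ring. Qed.

Lemma enorm_nonneg n u : 0 <= enorm n u.
Proof. apply sqrt_pos. Qed.

Lemma mink n u v : enorm n (fun i => u i + v i) <= enorm n u + enorm n v.
Proof.
  unfold enorm. rewrite sumsq_add.
  pose proof (sumsq_nonneg n u). pose proof (sumsq_nonneg n v).
  pose proof (sqrt_pos (sumsq n u)). pose proof (sqrt_pos (sumsq n v)).
  pose proof (sqrt_sqrt _ H). pose proof (sqrt_sqrt _ H0).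
  assert (dot n u v <= sqrt (sumsq n u) * sqrt (sumsq n v)).
  { pose proof (cs n u v) as C.
    set (s1 := sqrt (sumsq n u)) in *. set (s2 := sqrt (sumsq n v)) in *.
    assert (E: sumsq n u * sumsq n v = (s1*s2)^2) by (rewrite <- H3, <- H4; ring).
    rewrite E in C. assert (0 <= s1*s2) by (apply Rmult_le_pos; lra).
    destruct (Rle_lt_dec (dot n u v) (s1*s2)); auto. nra. }
  rewrite <- (sqrt_pow2 (sqrt (sumsq n u) + sqrt (sumsq n v))) by lra.
  apply sqrt_le_1_alt. nra.
Qed.

Lemma tri n a b c : enorm n (vsub a c) <= enorm n (vsub a b) + enorm n (vsub b c).
Proof.
  eapply Rle_trans; [| apply mink]. right. unfold enorm. f_equal.
  apply sumsq_ext2. intros i. unfold vsub. f_equal. ring.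
Qed.

Lemma esym n a b : enorm n (vsub a b) = enorm n (vsub b a).
Proof. unfold enorm. f_equal. apply sumsq_ext2. intros i; unfold vsub; ring. Qed.

Fixpoint ps (a : nat -> R) (p m : nat) : R :=
  match m with O => 0 | S m => ps a p m + a (p + m)%nat end.

Lemma ps_sum a p m : ps a p (S m) = sum_n_m a p (p + m).
Proof.
  induction m. simpl. rewrite Nat.add_0_r, sum_n_n. ring.
  change (ps a p (S (S m))) with (ps a p (S m) + a (p + S m)%nat).
  rewrite IHm. replace (p + S m)%nat with (S (p + m)) by lia.
  rewrite sum_n_Sm by lia. reflexivity.
Qed.

Lemma core n (x d : nat -> vec) (xbar : vec) :
  ex_series (fun j : nat =>
    enorm n (vsub (x (S j + 1)%nat) (x (S j))) * enorm n (d (S j))) ->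
  accumulation_point n x xbar ->
  accumulation_point n d (fun _ => 0) ->
  forall eps, 0 < eps -> forall N, exists k, (N <= k)%nat /\ (1 <= k)%nat /\
    enorm n (vsub (x k) xbar) < eps /\ enorm n (vsub (d k) (fun _ => 0)) < eps.
Proof.
  intros Hs Hx Hd eps Heps N.
  apply NNPP. intros Hn.
  assert (H : forall k, (N <= k)%nat -> (1 <= k)%nat -> enorm n (vsub (x k) xbar) < eps ->
     eps <= enorm n (vsub (d k) (fun _ => 0))).
  { intros k H1 H2 H3. destruct (Rlt_le_dec (enorm n (vsub (d k) (fun _ => 0))) eps); auto.
    exfalso; apply Hn; exists k; auto. }
  set (a := fun j : nat =>
    enorm n (vsub (x (S j + 1)%nat) (x (S j))) * enorm n (d (S j))) in *.
  assert (ha : forall j, 0 <= a j).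
  { intros j; unfold a. apply Rmult_le_pos; apply enorm_nonneg. }
  pose proof (Cauchy_ex_series _ Hs) as Hs2. clear Hs. rename Hs2 into Hs.
  assert (Hpos : 0 < eps * eps / 2) by nra.
  destruct (Hs (mkposreal _ Hpos)) as [N0 HN0]. simpl in HN0.
  assert (Htail : forall p m, (N0 <= p)%nat -> ps a p m < eps * eps / 2).
  { intros p m Hp. destruct m. simpl; lra.
    rewrite ps_sum. specialize (HN0 p (p + m)%nat Hp ltac:(lia)).
    eapply Rle_lt_trans; [| exact HN0]. apply Rle_abs. }
  assert (Hpsn : forall p m, 0 <= ps a p m).
  { intros p m; induction m; simpl; [lra| specialize (ha (p+m)%nat); lra]. }
  assert (He2 : 0 < eps / 2) by lra.
  destruct (Hx _ He2 (Nat.max N (S N0))) as [k1 [Hk1 [Hk1' Hk1x]]].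
  destruct k1 as [|p]; [lia|].
  assert (HpN0 : (N0 <= p)%nat) by lia.
  assert (Q : forall m, eps * enorm n (vsub (x (S p + m)%nat) (x (S p))) <= ps a p m).
  { induction m.
    - simpl. rewrite Nat.add_0_r. unfold enorm, vsub.
      rewrite (sumsq_ext2 n _ (fun _ => 0)). 2:{ intros; simpl; ring. }
      rewrite sumsq0.
      rewrite sqrt_0. lra.
    - assert (Hclose : enorm n (vsub (x (S p + m)%nat) xbar) < eps).
      { pose proof (tri n (x (S p + m)%nat) (x (S p)) xbar).
        pose proof (Htail p m HpN0).
        assert (enorm n (vsub (x (S p + m)%nat) (x (S p))) < eps / 2).
        { apply Rmult_lt_reg_l with eps; [lra|]. nra. }
        lra. }
      pose proof (H (S p + m)%nat ltac:(lia) ltac:(lia) Hclose) as Hd'.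
      simpl ps.
      pose proof (tri n (x (S p + S m)%nat) (x (S p + m)%nat) (x (S p))).
      assert (a (p + m)%nat = enorm n (vsub (x (S p + S m)%nat) (x (S p + m)%nat)) *
               enorm n (vsub (d (S p + m)%nat) (fun _ => 0))).
      { unfold a. replace (S (p + m) + 1)%nat with (S p + S m)%nat by lia.
        replace (S (p + m)) with (S p + m)%nat by lia. f_equal.
        unfold enorm. f_equal. apply sumsq_ext2. intros; unfold vsub; f_equal; ring. }
      pose proof (enorm_nonneg n (vsub (x (S p + S m)%nat) (x (S p + m)%nat))).
      nra. }
  assert (Hall : forall m, eps <= enorm n (vsub (d (S p + m)%nat) (fun _ => 0))).
  { intros m. apply H; try lia.
    pose proof (tri n (x (S p + m)%nat) (x (S p)) xbar).
    pose proof (Htail p m HpN0). pose proof (Q m).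
    assert (enorm n (vsub (x (S p + m)%nat) (x (S p))) < eps / 2).
    { apply Rmult_lt_reg_l with eps; [lra|]. nra. }
    lra. }
  destruct (Hd eps Heps (S p)) as [k [Hk [_ Hkd]]].
  specialize (Hall (k - S p)%nat). replace (S p + (k - S p))%nat with k in Hall by lia.
  lra.
Qed.

Theorem mainTheorem1 (n : nat) (x d : nat -> vec) (xbar : vec) :
  ex_series (fun j : nat =>
    enorm n (vsub (x (S j + 1)%nat) (x (S j))) * enorm n (d (S j))) ->
  accumulation_point n x xbar ->
  accumulation_point n d (fun _ => 0) ->
  exists J : nat -> Prop,
    (forall k, J k -> (1 <= k)%nat) /\ infinite_set J /\
    converges_along n J x xbar /\ converges_along n J d (fun _ => 0).
Proof.
  intros Hs Hx Hd.
  pose proof (core n x d xbar Hs Hx Hd) as C.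
  set (P := fun m k => (1 <= k)%nat /\
    enorm n (vsub (x k) xbar) < / (INR m + 1) /\ enorm n (vsub (d k) (fun _ => 0)) < / (INR m + 1)).
  assert (HF : forall m N, {k | (N <= k)%nat /\ P m k}).
  { intros m N. apply constructive_indefinite_description.
    assert (0 < / (INR m + 1)) by (apply Rinv_0_lt_compat; pose proof (pos_INR m); lra).
    destruct (C _ H N) as [k [H1 [H2 [H3 H4]]]]. exists k. unfold P; auto. }
  set (f := fun m N => proj1_sig (HF m N)).
  assert (Hf : forall m N, (N <= f m N)%nat /\ P m (f m N)).
  { intros m N. unfold f. destruct (HF m N); auto. }
  set (s := fix s m := match m with O => f O O | S m' => f m (S (s m')) end).
  assert (Hsp : forall m, P m (s m)).
  { intros m; destruct m; simpl; apply Hf. }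
  assert (Hsinc : forall m, (s m < s (S m))%nat).
  { intros m. change (s (S m)) with (f (S m) (S (s m))). apply Hf. }
  assert (Hmono : forall m j, (s m < s (m + S j))%nat).
  { intros m j; induction j.
    - rewrite Nat.add_1_r. apply Hsinc.
    - replace (m + S (S j))%nat with (S (m + S j)) by lia.
      specialize (Hsinc (m + S j)%nat). lia. }
  assert (Hge : forall m, (m <= s m)%nat).
  { induction m; [lia|]. specialize (Hsinc m). lia. }
  exists (fun k => exists m, k = s m).
  assert (Hconv : forall (y : nat -> vec) a,
    (forall m, enorm n (vsub (y (s m)) a) < / (INR m + 1)) ->
    converges_along n (fun k => exists m, k = s m) y a).
  { intros y a Hy eps Heps.
    destruct (archimed_cor1 eps Heps) as [M [HM HM0]].
    exists (s M). intros k [m ->] Hk.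
    assert (HmM : (M <= m)%nat).
    { destruct (Nat.le_gt_cases M m) as [?|?]; auto.
      specialize (Hmono m (M - m - 1)%nat). replace (m + S (M - m - 1))%nat with M in Hmono by lia.
      lia. }
    eapply Rlt_le_trans; [apply Hy|].
    apply le_INR in HmM. apply lt_0_INR in HM0.
    assert (/ (INR m + 1) <= / INR M).
    { apply Rinv_le_contravar; lra. }
    lra. }
  split; [|split; [|split]].
  - intros k [m ->]. apply Hsp.
  - intros N. exists (s N). split; [apply Hge| eauto].
  - apply Hconv. intros m; apply Hsp.
  - apply Hconv. intros m; apply Hsp.
Qed.
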